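(* In the 3VA model, if $k=n$, then given a committee $W\subseteq C$ with $|W|=k$, the number of plausible approval profiles with respect to which $W$ satisfies JR can be computed in polynomial time. Consequently, JR-Probability (computing the probability that $W$ satisfies JR) is solvable in polynomial time when $k=n$.
   Context: An ABC instance consists of voters $V=[n]$, candidates $C=[m]$, an approval profile $A=(A_1,\dots,A_n)$ with $A_i\subseteq C$, and a positive integer $k$. A committee is a set $W\subseteq C$ with $|W|=k$. $W$ satisfies justified representation (JR) with respect to $A$ if for every $V'\subseteq V$ with $|V'|\ge \frac{n}{k}$ and $\bigcap_{i\in V'}A_i\neq\emptyset$, there is $i\in V'$ with $A_i\cap W\neq\emptyset$. In the 3VA model each voter $i$ approves each candidate $c$ independently with probability $p_{i,c}\in\{0,0.5,1\}$, yielding a random approval profile. A plausible approval profile is one with positive probability (i.e. $c\in A_i$ whenever $p_{i,c}=1$ and $c\notin A_i$ whenever $p_{i,c}=0$). *)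

(* Defs.v *)
From HB Require Import structures.
From mathcomp Require Import all_boot all_order all_algebra.
Set Implicit Arguments. Unset Strict Implicit. Unset Printing Implicit Defensive.
Import GRing.Theory Num.Theory.

(* W satisfies JR w.r.t. A (committee size k):
   for every V' with |V'| >= n/k (i.e. |V'| * k >= n) whose members share
   an approved candidate, some member of V' approves someone in W. *)
Definition JR (n m k : nat) (A : {ffun 'I_n -> {set 'I_m}}) (W : {set 'I_m}) : bool :=
  [forall V' : {set 'I_n},
     ((n <= #|V'| * k) && [exists c : 'I_m, [forall i in V', c \in A i]]) ==>
     [exists i in V', A i :&: W != set0]].

Inductive tri := P0 | Phalf | P1.

Definition tri_eqb (s t : tri) : bool :=
  match s, t with P0, P0 | Phalf, Phalf | P1, P1 => true | _, _ => false end.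
Lemma tri_eqP : Equality.axiom tri_eqb.
Proof. by case; case; constructor. Qed.
HB.instance Definition _ := hasDecEq.Build tri tri_eqP.

Definition tri_val (t : tri) : rat :=
  (match t with P0 => 0 | Phalf => 1 / 2 | P1 => 1 end)%R.

(* Plausible profile: positive probability. *)
Definition plausible (n m : nat) (p : 'I_n -> 'I_m -> tri)
  (A : {ffun 'I_n -> {set 'I_m}}) : bool :=
  [forall i, forall c,
     ((p i c == P1) ==> (c \in A i)) && ((p i c == P0) ==> (c \notin A i))].

Definition count_JR (n m k : nat) (p : 'I_n -> 'I_m -> tri) (W : {set 'I_m}) : nat :=
  #|[set A : {ffun 'I_n -> {set 'I_m}} | plausible p A && JR k A W]|.

Definition profile_prob (n m : nat) (p : 'I_n -> 'I_m -> tri)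
  (A : {ffun 'I_n -> {set 'I_m}}) : rat :=
  (\prod_(i : 'I_n) \prod_(c : 'I_m)
     (if c \in A i then tri_val (p i c) else 1 - tri_val (p i c)))%R.

Definition JR_prob (n m k : nat) (p : 'I_n -> 'I_m -> tri) (W : {set 'I_m}) : rat :=
  \sum_(A : {ffun 'I_n -> {set 'I_m}}) (profile_prob p A * (JR k A W)%:R)%R.

(* Machine model for "polynomial time": a random-access machine with   *)
(* natural-number registers under the LOGARITHMIC cost criterion       *)
(* (each instruction costs 1 + the bit lengths of all addresses and    *)
(* values it touches).                                                 *)

Inductive instr :=
| IConst (d v : nat)
| IAdd (d a b : nat)
| ISub (d a b : nat)          (* M[d] := M[a] - M[b] (truncated) *)
| IMul (d a b : nat)
| IDiv (d a b : nat)
| IMod (d a b : nat)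
| ILoad (d a : nat)
| IStore (a s : nat)
| IJz (a l : nat)
| IJmp (l : nat)
| IHalt.

Definition ram_mem := nat -> nat.

Definition upd (M : ram_mem) (d v : nat) : ram_mem := fun x => if x == d then v else M x.

(* bit length (at least 1) *)
Definition blen (x : nat) : nat := (Nat.log2 x).+1.

Definition step (pc : nat) (M : ram_mem) (i : instr) : nat * ram_mem * nat :=
  match i with
  | IConst d v => (pc.+1, upd M d v, 1 + blen d + blen v)
  | IAdd d a b => (pc.+1, upd M d (M a + M b),
                   1 + blen d + blen a + blen b + blen (M a) + blen (M b))
  | ISub d a b => (pc.+1, upd M d (M a - M b),
                   1 + blen d + blen a + blen b + blen (M a) + blen (M b))
  | IMul d a b => (pc.+1, upd M d (M a * M b),
                   1 + blen d + blen a + blen b + blen (M a) + blen (M b))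
  | IDiv d a b => (pc.+1, upd M d (M a %/ M b),
                   1 + blen d + blen a + blen b + blen (M a) + blen (M b))
  | IMod d a b => (pc.+1, upd M d (M a %% M b),
                   1 + blen d + blen a + blen b + blen (M a) + blen (M b))
  | ILoad d a => (pc.+1, upd M d (M (M a)),
                   1 + blen d + blen a + blen (M a) + blen (M (M a)))
  | IStore a s => (pc.+1, upd M (M a) (M s),
                   1 + blen a + blen s + blen (M a) + blen (M s))
  | IJz a l => ((if M a == 0 then l else pc.+1), M, 1 + blen a + blen l + blen (M a))
  | IJmp l => (l, M, 1 + blen l)
  | IHalt => (pc, M, 1)
  end.

(* run P fuel pc M = Some (M', t): starting at pc with memory M, the
   program halts (reaches IHalt or a pc outside P) within fuel steps,
   with final memory M' and total cost t. *)
Fixpoint run (P : seq instr) (fuel pc : nat) (M : ram_mem) : option (ram_mem * nat) :=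
  match fuel with
  | 0 => None
  | f.+1 =>
    match nth IHalt P pc with
    | IHalt => Some (M, 1)
    | i => let: (pc', M', c) := step pc M i in
           match run P f pc' M' with
           | Some (M'', t) => Some (M'', t + c)
           | None => None
           end
    end
  end.

(* Input encoding of an instance (p, W) with k = n:
   M[0] = n, M[1] = m, M[2 + i*m + c] = code of p_{i,c} (0 / 1 / 2 for
   0 / 0.5 / 1), M[2 + n*m + c] = [c \in W]; all other cells 0. *)
Definition tri_code (t : tri) : nat := match t with P0 => 0 | Phalf => 1 | P1 => 2 end.

Definition encode (n m : nat) (p : 'I_n -> 'I_m -> tri) (W : {set 'I_m}) : ram_mem :=
  fun a =>
    if a == 0 then n else if a == 1 then m
    else if a < 2 + n * m then
      match insub ((a - 2) %/ m) : option 'I_n, insub ((a - 2) %% m) : option 'I_m with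
      | Some i, Some c => tri_code (p i c)
      | _, _ => 0
      end
    else if a < 2 + n * m + m then
      match insub (a - 2 - n * m) : option 'I_m with
      | Some c => (c \in W : nat)
      | None => 0
      end
    else 0.

(* Size of the input (upper bound on its bit length, up to a constant). *)
Definition input_size (n m : nat) : nat := n * m + n + m + 1.

(* Main.v *)
Require Import Defs.
From Stdlib Require PeanoNat.
From Stdlib Require Import FunctionalExtensionality.
From mathcomp Require Import all_boot all_order all_algebra.
From mathcomp Require Import zify.
Import GRing.Theory Num.Theory.
Set Implicit Arguments. Unset Strict Implicit. Unset Printing Implicit Defensive.

(* Proof plan:
   - a fixed RAM program [prog] computes, row by row, the number of
     plausible profiles satisfying JR (for k = n, JR is equivalent to: every
     voter approves nobody or somebody in W) as a product of per-voter
     counts, and the common denominator prod_i 2^{#half entries of row i};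
   - [exec] is a step relation with per-step memory bound, from which the
     logarithmic cost bound follows;
   - the math part (section Math) relates the computed products with
     count_JR and JR_prob. *)

Lemma count_sets (T : finType) (Q : T -> bool -> bool) :
  #|[set S : {set T} | [forall c, Q c (c \in S)]]| = \prod_(c : T) (Q c true + Q c false).
Proof.
have -> : [set S : {set T} | [forall c, Q c (c \in S)]] =
   [set [set x | f x] | f : {ffun T -> bool} in (family (fun c => [pred b | Q c b]) : simpl_pred {ffun T -> bool})].
  apply/setP => S; rewrite inE; apply/forallP/imsetP.
    move=> H; exists [ffun x => x \in S].
      by apply/familyP => x; rewrite ffunE inE /=; apply: H.
    by apply/setP => x; rewrite inE ffunE.
  case=> f /familyP Hf -> c; rewrite inE; exact: Hf.
rewrite card_imset; last first.
  move=> f g /setP E; apply/ffunP => x; have := E x; by rewrite !inE.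
rewrite card_family foldrE big_map big_enum /=.
apply: eq_bigr => c _.
rewrite -sum1_card big_mkcond big_bool /=. rewrite /in_mem /=.
by case: (Q c true); case: (Q c false).
Qed.

Lemma card_ffun_forall (aT rT : finType) (G : aT -> {set rT}) :
  #|[set f : {ffun aT -> rT} | [forall x, f x \in G x]]| = \prod_(x : aT) #|G x|.
Proof.
have -> : #|[set f : {ffun aT -> rT} | [forall x, f x \in G x]]| =
  #|(family (fun x => mem (G x)) : simpl_pred {ffun aT -> rT})|.
  by apply: eq_card => f; rewrite inE; apply/forallP/familyP.
by rewrite card_family foldrE big_map big_enum.
Qed.

Lemma forall_andb (T : finType) (P Q : pred T) :
  [forall x, P x && Q x] = [forall x, P x] && [forall x, Q x].
Proof.
apply/forallP/andP => [H|[/forallP H1 /forallP H2] x]; last by rewrite H1 H2.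
by split; apply/forallP => x; case/andP: (H x).
Qed.

Definition hf (t : tri) : nat := tri_code t %% 2.
Definition onf (t : tri) : nat := tri_code t %/ 2.

Section Math.
Variables (n m : nat) (p : 'I_n -> 'I_m -> tri) (W : {set 'I_m}).

Definition Qc i c (b : bool) : bool := ((p i c == P1) ==> b) && ((p i c == P0) ==> ~~ b).

Definition Trow i := \prod_(c < m) (1 + hf (p i c)).
Definition Drow i := \prod_(c < m) (if c \in W then 1 - onf (p i c) else 1 + hf (p i c)).
Definition Zrow i := \prod_(c < m) (1 - onf (p i c)).
Definition good i := Trow i - (Drow i - Zrow i).

Lemma JR_nE (A : {ffun 'I_n -> {set 'I_m}}) : 0 < n ->
  JR n A W = [forall i, (A i == set0) || (A i :&: W != set0)].
Proof.
move=> n0; apply/forallP/forallP.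
  move=> H i; have := H [set i]; rewrite cards1 mul1n leqnn /=.
  case: (boolP (A i == set0)) => //= /set0Pn [c Hc] /implyP Himp.
  have : [exists c, [forall j in [set i], c \in A j]].
    by apply/existsP; exists c; apply/forallP => j; apply/implyP; rewrite inE => /eqP->.
  by move/Himp => /existsP [j /andP []]; rewrite inE => /eqP->.
move=> H V'; apply/implyP => /andP [Hcard /existsP [c /forallP Hc]].
have : 0 < #|V'|.
  by case: #|V'| Hcard => //; rewrite mul0n leqn0 => /eqP E; rewrite E in n0.
case/card_gt0P => i Hi; apply/existsP; exists i; rewrite Hi /=.
have cA : c \in A i by have := Hc i; rewrite Hi.
case/orP: (H i) => [/eqP E|//]; by rewrite E inE in cA.
Qed.

Definition Gset i := [set S : {set 'I_m} | [forall c, Qc i c (c \in S)] &&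
                                            ((S == set0) || (S :&: W != set0))].

Lemma card_Gset i : #|Gset i| = good i.
Proof.
set Pl := [set S : {set 'I_m} | [forall c, Qc i c (c \in S)]].
set Ds := [set S : {set 'I_m} | [forall c, Qc i c (c \in S) && ((c \in W) ==> (c \notin S))]].
set Zs := [set S : {set 'I_m} | [forall c, Qc i c (c \in S) && (c \notin S)]].
have hPl : #|Pl| = Trow i.
  rewrite count_sets; apply: eq_bigr => c _; rewrite /Qc /hf.
  by case: (p i c).
have hDs : #|Ds| = Drow i.
  rewrite (count_sets (fun c b => Qc i c b && ((c \in W) ==> ~~ b))).
  apply: eq_bigr => c _; rewrite /Qc /hf /onf.
  by case: (c \in W); case: (p i c).
have hZs : #|Zs| = Zrow i.
  rewrite (count_sets (fun c b => Qc i c b && ~~ b)).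
  apply: eq_bigr => c _; rewrite /Qc /hf /onf.
  by case: (p i c).
have sZD : Zs \subset Ds.
  apply/subsetP => S; rewrite !inE => /forallP H; apply/forallP => c.
  by case/andP: (H c) => -> ->; rewrite implybT.
have E1 : Pl :\: Gset i = Ds :\: Zs.
  apply/setP => S; rewrite !inE !forall_andb.
  have e1 : (S == set0) = [forall c, c \notin S].
    apply/eqP/forallP => [-> c|H]; first by rewrite inE.
    by apply/setP => c; rewrite inE (negbTE (H c)).
  have e2 : (S :&: W == set0) = [forall c, (c \in W) ==> (c \notin S)].
    apply/eqP/forallP => [E c|H].
      apply/implyP => cW; apply/negP => cS.
      by have := in_set0 c; rewrite -E inE cS cW.
    apply/setP => c; rewrite !inE; have := H c.
    by case: (c \in S); case: (c \in W).
  rewrite e1 e2.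
  have imp : [forall c, c \notin S] -> [forall c, (c \in W) ==> (c \notin S)].
    by move=> /forallP H; apply/forallP => c; rewrite H implybT.
  move: imp; case: [forall x, (p i x == P1) ==> (x \in S)];
    case: [forall x, (p i x == P0) ==> (x \notin S)]; case: [forall c, c \notin S];
    case: [forall c, (c \in W) ==> (c \notin S)] => //=.
have sGP : Gset i \subset Pl.
  by apply/subsetP => S; rewrite !inE => /andP [].
have := cardsID (Gset i) Pl.
rewrite (setIidPr sGP) E1 cardsD (setIidPr sZD) hPl hDs hZs /good => <-.
by rewrite addnK.
Qed.

Lemma count_JR_E : 0 < n -> count_JR n p W = \prod_(i < n) good i.
Proof.
move=> n0; rewrite /count_JR.
have -> : [set A | plausible p A && JR n A W] =
          [set A : {ffun 'I_n -> {set 'I_m}} | [forall i, A i \in Gset i]].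
  apply/setP => A; rewrite !inE JR_nE // -forall_andb.
  by apply: eq_forallb => i; rewrite inE.
by rewrite card_ffun_forall; apply: eq_bigr => i _; apply: card_Gset.
Qed.

Lemma prod_bool (T : finType) (b : pred T) : \prod_(x : T) (b x : nat) = [forall x, b x].
Proof.
case: (boolP [forall x, b x]) => [/forallP H|/forallPn [x Hx]].
  by rewrite big1 // => x _; rewrite H.
by rewrite (bigD1 x) //= (negbTE Hx) mul0n.
Qed.

Local Open Scope ring_scope.

Lemma profile_probE (A : {ffun 'I_n -> {set 'I_m}}) :
  profile_prob p A = (plausible p A)%:R / (\prod_(i < n) Trow i)%:R.
Proof.
rewrite /profile_prob.
have -> : plausible p A = [forall i, [forall c, Qc i c (c \in A i)]] by [].
rewrite -prod_bool.
have E : forall i, [forall c, Qc i c (c \in A i)] = \prod_(c < m) (Qc i c (c \in A i) : nat) :> nat.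
  by move=> i; rewrite prod_bool.
rewrite (eq_bigr _ (fun i _ => E i)) !natr_prod /Trow.
rewrite -prodfV -big_split /=; apply: eq_bigr => i _.
rewrite !natr_prod -prodfV -big_split /=; apply: eq_bigr => c _.
rewrite /Qc /hf /tri_val; case: (p i c); case: (c \in A i) => /=.
all: rewrite ?mul1r ?mul0r ?invr1 ?subr0 ?subrr //.
Qed.

Lemma JR_prob_E : (0 < n)%N ->
  JR_prob n p W = (count_JR n p W)%:R / (\prod_(i < n) Trow i)%:R.
Proof.
move=> n0; rewrite /JR_prob /count_JR.
under eq_bigr => A _ do rewrite profile_probE mulrAC -natrM -/(nat_of_bool _).
rewrite -mulr_suml -natr_sum; congr (_ %:R / _).
rewrite -sum1dep_card [RHS]big_mkcond /=.
by apply: eq_bigr => A _; case: (plausible p A); case: (JR n A W).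
Qed.
End Math.


Definition args (i : instr) : seq nat :=
  match i with
  | IConst d v => [:: d; v]
  | IAdd d a b | ISub d a b | IMul d a b | IDiv d a b | IMod d a b => [:: d; a; b]
  | ILoad d a => [:: d; a]
  | IStore a s => [:: a; s]
  | IJz a l => [:: a; l]
  | IJmp l => [:: l]
  | IHalt => [::]
  end.

Definition okP (P : seq instr) := all (fun i => all (fun x => x <= 128) (args i)) P.

Definition mb (M : ram_mem) V := forall x, M x <= V.

Inductive exec (P : seq instr) (V : nat) : nat -> ram_mem -> nat -> nat -> ram_mem -> Prop :=
| ex0 pc M K : exec P V pc M K pc M
| exS pc M K pc' M' c pc'' M'' :
    nth IHalt P pc <> IHalt -> mb M V ->
    step pc M (nth IHalt P pc) = (pc', M', c) ->
    exec P V pc' M' K pc'' M'' -> exec P V pc M K.+1 pc'' M''.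

Lemma blen_mono x y : x <= y -> blen x <= blen y.
Proof. by rewrite /blen ltnS => /leP h; apply/leP; apply: PeanoNat.Nat.log2_le_mono. Qed.

Lemma step_cost pc M i V : all (fun x => x <= 128) (args i) -> 128 <= V -> mb M V ->
  (step pc M i).2 <= 1 + 6 * blen V.
Proof.
move=> ha hV hM.
have bl : forall x, x <= V -> blen x <= blen V by move=> x; apply: blen_mono.
have bM : forall x, blen (M x) <= blen V by move=> x; apply: bl.
have bc : forall x, x <= 128 -> blen x <= blen V.
  by move=> x hx; apply: bl; apply: leq_trans hV.
case: i ha => /=.
- move=> d v /and3P [h1 h2 _]; have := bc _ h1; have := bc _ h2; lia.
- move=> d a b /and4P [h1 h2 h3 _]; have := bc _ h1; have := bc _ h2; have := bc _ h3;
  have := bM a; have := bM b; lia.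
- move=> d a b /and4P [h1 h2 h3 _]; have := bc _ h1; have := bc _ h2; have := bc _ h3;
  have := bM a; have := bM b; lia.
- move=> d a b /and4P [h1 h2 h3 _]; have := bc _ h1; have := bc _ h2; have := bc _ h3;
  have := bM a; have := bM b; lia.
- move=> d a b /and4P [h1 h2 h3 _]; have := bc _ h1; have := bc _ h2; have := bc _ h3;
  have := bM a; have := bM b; lia.
- move=> d a b /and4P [h1 h2 h3 _]; have := bc _ h1; have := bc _ h2; have := bc _ h3;
  have := bM a; have := bM b; lia.
- move=> d a /and3P [h1 h2 _]; have := bc _ h1; have := bc _ h2;
  have := bM a; have := bM (M a); lia.
- move=> a s /and3P [h1 h2 _]; have := bc _ h1; have := bc _ h2;
  have := bM a; have := bM s; lia.
- move=> a l /and3P [h1 h2 _]; have := bc _ h1; have := bc _ h2; have := bM a; lia.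
- move=> l /andP [h1 _]; have := bc _ h1; lia.
- lia.
Qed.

Lemma run_step P f pc M : nth IHalt P pc <> IHalt ->
  run P f.+1 pc M =
  (let: (pc', M', c) := step pc M (nth IHalt P pc) in
   match run P f pc' M' with Some (M'', t) => Some (M'', t + c) | None => None end).
Proof. move=> H; rewrite /=; case: (nth IHalt P pc) H => //. Qed.

Lemma exec_run P V pc M K pc' M' : okP P -> 128 <= V -> exec P V pc M K pc' M' ->
  nth IHalt P pc' = IHalt ->
  exists f t, run P f pc M = Some (M', t) /\ t <= K * (1 + 6 * blen V) + 1.
Proof.
move=> oP hV; elim => {pc M K pc' M'}.
  move=> pc M K Hh; exists 1, 1; split; first by rewrite /= Hh.
  lia.
move=> pc M K pc' M' c pc'' M'' Hni Hmb Hst Hex IH Hh.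
case: (IH Hh) => f [t [Hr Ht]].
exists f.+1, (t + c); rewrite (run_step _ _ Hni) Hst Hr; split => //.
have hc : c <= 1 + 6 * blen V.
  have := @step_cost pc M (nth IHalt P pc) V; rewrite Hst /=; apply => //.
  case: (ltnP pc (size P)) => hs.
    exact: (all_nthP IHalt oP pc hs).
  by rewrite nth_default.
rewrite mulSn; lia.
Qed.

Lemma exec_mono P V pc M K K' pc1 M1 : K <= K' ->
  exec P V pc M K pc1 M1 -> exec P V pc M K' pc1 M1.
Proof.
move=> hK H; elim: H K' hK => {pc M K pc1 M1}; first by move=> *; apply: ex0.
move=> pc M K pc' M' c pc'' M'' h1 h2 h3 h4 IH [|K'] //= hK.
by apply: exS h1 h2 h3 (IH _ hK).
Qed.

Lemma exec_trans P V pc M K1 pc1 M1 K2 pc2 M2 :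
  exec P V pc M K1 pc1 M1 -> exec P V pc1 M1 K2 pc2 M2 -> exec P V pc M (K1 + K2) pc2 M2.
Proof.
elim => {pc M K1 pc1 M1}.
  by move=> pc M K H; apply: exec_mono H; apply: leq_addl.
move=> pc M K pc' M' c pc'' M'' h1 h2 h3 h4 IH H.
by rewrite addSn; apply: exS h1 h2 h3 (IH H).
Qed.



Definition copy_code : seq instr :=
  flatten [seq [:: IConst 1 j; IAdd 1 0 1; IStore 1 j] | j <- iota 2 22].

Definition read_code (ra rx : nat) : seq instr :=
  [:: ISub 19 3 ra; ISub 15 19 2; ISub 19 19 15; IMul 19 19 0; IAdd 19 19 ra; ILoad rx 19].

Definition prog : seq instr :=
  [:: IMul 0 0 1; IAdd 0 0 1; IAdd 0 0 0; IAdd 0 0 0; IAdd 0 0 0; IAdd 0 0 0; IStore 0 1]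
  ++ copy_code ++
  [:: ILoad 8 0; IConst 2 1; IConst 3 24; IConst 20 2; IConst 19 16;  (* 73..77 *)
      IDiv 4 0 19; ISub 4 4 8; IAdd 4 4 20; IConst 5 2; IMul 6 4 2;
      IConst 12 1; IConst 13 1;
      ISub 19 4 5; IJz 19 126;                                           (* 85..86 OHEAD *)
      IConst 9 1; IConst 10 1; IConst 11 1; IMul 7 8 2;
      IJz 7 120]                                                         (* 91 IHEAD *)
  ++ read_code 5 14 ++
  [:: IMod 16 14 20; IDiv 17 14 20]
  ++ read_code 6 18 ++
  [:: IMul 15 9 16; IAdd 9 9 15; ISub 15 2 17; IMul 11 11 15;
      IMul 15 15 18; ISub 19 2 18; IAdd 14 2 16; IMul 19 19 14;
      IAdd 15 15 19; IMul 10 10 15; IAdd 5 5 2; IAdd 6 6 2; ISub 7 7 2;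
      IJmp 91;
      ISub 6 6 8; ISub 15 10 11; ISub 15 9 15; IMul 12 12 15;           (* 120..123 IEXIT *)
      IMul 13 13 9; IJmp 85;
      IMul 0 12 2; IMul 1 13 2; IHalt].                                  (* 126..128 OEXIT *)

Lemma prog_ok : okP prog. Proof. by []. Qed.
Lemma prog_size : size prog = 129. Proof. by []. Qed.
Lemma prog_91 : nth IHalt prog 91 = IJz 7 120. Proof. by []. Qed.
Lemma prog_128 : nth IHalt prog 128 = IHalt. Proof. by []. Qed.
Lemma prog_copy k : k < 22 ->
  [/\ nth IHalt prog (7 + 3 * k) = IConst 1 (2 + k),
      nth IHalt prog (7 + 3 * k).+1 = IAdd 1 0 1 &
      nth IHalt prog (7 + 3 * k).+2 = IStore 1 (2 + k)].
Proof. by do 22! (case: k => [|k]) => //. Qed.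


Definition rmem (H : ram_mem) (s : seq nat) : ram_mem :=
  fun x => if x < 24 then nth 0 s x else H x.
Definition allb V (s : seq nat) := all (fun x => x <= V) s.

Lemma nth_allb V s i : allb V s -> nth 0 s i <= V.
Proof.
move=> h; case: (ltnP i (size s)) => hi; first exact: (all_nthP 0 h i hi).
by rewrite nth_default.
Qed.

Lemma mb_rmem H s V : mb H V -> allb V s -> mb (rmem H s) V.
Proof. by move=> hH hs x; rewrite /rmem; case: ifP => _; [apply: nth_allb|apply: hH]. Qed.

Lemma upd_rmem H s d v : d < 24 -> upd (rmem H s) d v = rmem H (set_nth 0 s d v).
Proof.
move=> hd; apply: functional_extensionality => x.
rewrite /upd /rmem nth_set_nth /=; case: eqP => [->|//]; by rewrite hd.
Qed.

Lemma allb_set V s d v : allb V s -> v <= V -> allb V (set_nth 0 s d v).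
Proof.
move=> hs hv; apply/(all_nthP 0) => i hi; rewrite nth_set_nth /=.
by case: ifP => _ //; apply: nth_allb.
Qed.

Lemma nthS (s : seq nat) d v k : nth 0 (set_nth 0 s d v) k = if k == d then v else nth 0 s k.
Proof. by rewrite nth_set_nth. Qed.

Definition XG V (Q : ram_mem -> Prop) pc M K :=
  exists M2, exec prog V pc M K 128 M2 /\ Q M2.

Section Steps.
Variable V : nat.
Variable H : ram_mem.
Hypothesis hH : mb H V.

Lemma ex_mem s pc K Q :
  nth IHalt prog pc <> IHalt -> allb V s ->
  XG V Q (step pc (rmem H s) (nth IHalt prog pc)).1.1
               (step pc (rmem H s) (nth IHalt prog pc)).1.2 K ->
  XG V Q pc (rmem H s) K.+1.
Proof.
move=> hn hs; case E: step => [[pc' M'] c] /= [M2 [hx hq]].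
by exists M2; split => //; apply: exS hn (mb_rmem hH hs) E hx.
Qed.

Lemma ex_wr s pc i d v K Q :
  nth IHalt prog pc = i ->
  (step pc (rmem H s) i).1 = (pc.+1, upd (rmem H s) d v) ->
  i <> IHalt -> d < 24 -> allb V s -> v <= V ->
  (allb V (set_nth 0 s d v) -> XG V Q pc.+1 (rmem H (set_nth 0 s d v)) K) ->
  XG V Q pc (rmem H s) K.+1.
Proof.
move=> hi E hn hd hs hv hx; apply: ex_mem; rewrite ?hi //.
by rewrite E /= upd_rmem //; apply: hx; apply: allb_set.
Qed.

Lemma ex_load s pc d a K Q :
  nth IHalt prog pc = ILoad d a -> d < 24 -> a < 24 -> 24 <= nth 0 s a -> allb V s ->
  (allb V (set_nth 0 s d (H (nth 0 s a))) ->
     XG V Q pc.+1 (rmem H (set_nth 0 s d (H (nth 0 s a)))) K) ->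
  XG V Q pc (rmem H s) K.+1.
Proof.
move=> hi hd ha hr hs hx; apply: (@ex_wr _ _ _ d (H (nth 0 s a))) hi _ _ _ _ _ _ => //.
by rewrite /= /rmem ha ltnNge hr.
Qed.

Lemma ex_jz_t s pc a l K Q :
  nth IHalt prog pc = IJz a l -> a < 24 -> nth 0 s a = 0 -> allb V s ->
  XG V Q l (rmem H s) K ->
  XG V Q pc (rmem H s) K.+1.
Proof. by move=> hi ha h0 hs hx; apply: ex_mem => //; rewrite ?hi //= /rmem ha h0. Qed.

Lemma ex_jz_f s pc a l K Q :
  nth IHalt prog pc = IJz a l -> a < 24 -> nth 0 s a != 0 -> allb V s ->
  XG V Q pc.+1 (rmem H s) K ->
  XG V Q pc (rmem H s) K.+1.
Proof. by move=> hi ha h0 hs hx; apply: ex_mem => //; rewrite ?hi //= /rmem ha (negbTE h0). Qed.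

Lemma ex_jmp s pc l K Q :
  nth IHalt prog pc = IJmp l -> allb V s ->
  XG V Q l (rmem H s) K ->
  XG V Q pc (rmem H s) K.+1.
Proof. by move=> hi hs hx; apply: ex_mem => //; rewrite ?hi. Qed.

Lemma rmem_lo s x : x < 24 -> rmem H s x = nth 0 s x.
Proof. by rewrite /rmem => ->. Qed.
End Steps.

Ltac wr hH := eapply (ex_wr hH); [eassumption || reflexivity | simpl; reflexivity | discriminate | by [] | assumption |
   rewrite ?rmem_lo //= ?nthS /= |
   let h := fresh "hb" in move=> h; rewrite ?rmem_lo //= ?nthS /= in h *].



Definition addr (base a : nat) := (24 - a - (24 - a - 1)) * base + a.

Section Main.
Variables (n m : nat) (p : 'I_n -> 'I_m -> tri) (W : {set 'I_m}) (H : ram_mem).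
Let E := encode p W.
Let base := 16 * (n * m + m).
Let V := 2 ^ (n * m) + 64 * (n * m + n + m + 2).
Hypotheses (n0 : 0 < n) (m0 : 0 < m) (hH : mb H V).
Hypothesis Hrd : forall a, 2 <= a < 2 + n * m + m -> 24 <= addr base a /\ H (addr base a) = E a.

Definition fixed s := nth 0 s 0 = base /\ nth 0 s 2 = 1 /\ nth 0 s 3 = 24 /\
  nth 0 s 4 = 2 + n * m /\ nth 0 s 8 = m /\ nth 0 s 20 = 2.

Lemma fixed_set s d v : fixed s -> d \notin [:: 0; 2; 3; 4; 8; 20] -> fixed (set_nth 0 s d v).
Proof.
rewrite /fixed => -[f0 [f2 [f3 [f4 [f8 f20]]]]] hd.
have hk : forall k, k \in [:: 0; 2; 3; 4; 8; 20] -> (k == d) = false.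
  by move=> k hk; apply/eqP => Ek; subst; rewrite hk in hd.
by rewrite !nth_set_nth /= !hk.
Qed.

Lemma baseV : base + 24 <= V.
Proof. rewrite /base /V; have := leq_addl (2 ^ (n * m)) (64 * (n * m + n + m + 2)); lia. Qed.

Lemma read_mac s pc ra rx a K Q :
  nth IHalt prog pc = ISub 19 3 ra ->
  nth IHalt prog pc.+1 = ISub 15 19 2 ->
  nth IHalt prog pc.+2 = ISub 19 19 15 ->
  nth IHalt prog pc.+3 = IMul 19 19 0 ->
  nth IHalt prog pc.+4 = IAdd 19 19 ra ->
  nth IHalt prog pc.+4.+1 = ILoad rx 19 ->
  (ra == 5) && (rx == 14) || (ra == 6) && (rx == 18) ->
  fixed s -> nth 0 s ra = a -> 2 <= a < 2 + n * m + m -> allb V s ->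
  (forall s', allb V s' -> nth 0 s' rx = E a ->
     (forall k, k \notin [:: 15; 19; rx] -> nth 0 s' k = nth 0 s k) ->
     XG V Q pc.+4.+2 (rmem H s') K) ->
  XG V Q pc (rmem H s) K.+4.+2.
Proof.
move=> h0 h1 h2 h3 h4 h5 hr fs ea ha hs hx.
have fs' := fs; case: fs' => f0 [f2 [f3 _]].
have bV := baseV.
have [ad [Hd]] := Hrd ha.
rewrite /addr in ad Hd.
have t1 : 24 - a - (24 - a - 1) <= 1 by lia.
have t2 : (24 - a - (24 - a - 1)) * base <= base.
  by apply: leq_trans (leq_mul t1 (leqnn base)) _; rewrite mul1n.
case/orP: hr => /andP [/eqP er /eqP ex]; subst ra rx.
all: wr hH; first by rewrite f3 ea; lia.
all: wr hH; first by rewrite f3 ea f2; lia.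
all: wr hH; first by rewrite f3 ea f2; lia.
all: wr hH; first by rewrite f3 ea f2 f0; lia.
all: wr hH; first by rewrite f3 ea f2 f0; rewrite /V /base in bV t2 *; lia.
all: eapply (ex_load hH); [eassumption|by []|by []| | assumption|].
all: rewrite ?nthS /= ?f3 ?ea ?f2 ?f0 //.
all: move=> hbL; apply: hx => //; first by rewrite nthS /= ?f3 ?ea ?f2 ?f0.
all: move=> k; rewrite !inE => /norP [/negbTE k15 /norP [/negbTE k19 /negbTE kx]].
all: by rewrite !nthS /= ?k15 ?k19 ?kx.
Qed.

Lemma E_code (i : 'I_n) (c : 'I_m) : E (2 + i * m + c) = tri_code (p i c).
Proof.
have hi := ltn_ord i; have hc := ltn_ord c.
have lt : 2 + i * m + c < 2 + n * m.
  have : i.+1 * m <= n * m by rewrite leq_mul2r hi orbT.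
  rewrite mulSn; lia.
rewrite /E /encode lt -addnA addKn.
have -> : (i * m + c) %/ m = i by rewrite divnMDl // divn_small // addn0.
have -> : (i * m + c) %% m = c by rewrite modnMDl modn_small.
by rewrite (insubT (fun k => k < n) hi) (insubT (fun k => k < m) hc) /=; congr (tri_code (p _ _)); apply: val_inj.
Qed.

Lemma E_w (c : 'I_m) : E (2 + n * m + c) = (c \in W).
Proof.
have hc := ltn_ord c.
rewrite /E /encode /= ltnNge leq_addr /= ltn_add2l hc -addnA addKn addKn.
by rewrite (insubT (fun k => k < m) hc) /=; congr (_ \in W); apply: val_inj.
Qed.

Lemma cd_le (i j : nat) : i < n -> j < m -> E (2 + i * m + j) <= 2.
Proof. move=> hi hj; rewrite (E_code (Ordinal hi) (Ordinal hj)); by case: (p _ _). Qed.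

Lemma wb_le (j : nat) : j < m -> E (2 + n * m + j) <= 1.
Proof. move=> hj; rewrite (E_w (Ordinal hj)); by case: (_ \in W). Qed.

Lemma E_le x : E x <= n + m + 2.
Proof.
rewrite /E /encode; case: ifP => _; first lia.
case: ifP => _; first lia.
case: ifP => _.
  move: (insub ((x - 2) %/ m) : option 'I_n) (insub ((x - 2) %% m) : option 'I_m) => [i|] [c|] //.
  case: (p i c) => /=; lia.
case: ifP => _ //; move: (insub (x - 2 - n * m) : option 'I_m) => [c|] //; case: (c \in W) => /=; lia.
Qed.

Definition Tp i j := \prod_(c < j) (1 + E (2 + i * m + c) %% 2).
Definition Zp i j := \prod_(c < j) (1 - E (2 + i * m + c) %/ 2).
Definition Dp i j := \prod_(c < j) ((1 - E (2 + i * m + c) %/ 2) * E (2 + n * m + c) +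
                                    (1 - E (2 + n * m + c)) * (1 + E (2 + i * m + c) %% 2)).

Lemma TpS i j : Tp i j.+1 = Tp i j * (1 + E (2 + i * m + j) %% 2).
Proof. by rewrite /Tp big_ord_recr. Qed.
Lemma ZpS i j : Zp i j.+1 = Zp i j * (1 - E (2 + i * m + j) %/ 2).
Proof. by rewrite /Zp big_ord_recr. Qed.
Lemma DpS i j : Dp i j.+1 = Dp i j * ((1 - E (2 + i * m + j) %/ 2) * E (2 + n * m + j) +
                                    (1 - E (2 + n * m + j)) * (1 + E (2 + i * m + j) %% 2)).
Proof. by rewrite /Dp big_ord_recr. Qed.

Lemma Tp_le i j : Tp i j <= 2 ^ j.
Proof.
elim: j => [|j IH]; first by rewrite /Tp big_ord0.
rewrite TpS expnSr; apply: leq_mul => //; have := ltn_pmod (E (2 + i * m + j)) (isT : 0 < 2); lia.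
Qed.
Lemma Zp_le i j : Zp i j <= 1.
Proof.
elim: j => [|j IH]; first by rewrite /Zp big_ord0.
by rewrite ZpS -(muln1 1); apply: leq_mul => //; rewrite leq_subr.
Qed.
Lemma Dp_le i j : j <= m -> Dp i j <= 2 ^ j.
Proof.
elim: j => [|j IH] hj; first by rewrite /Dp big_ord0.
rewrite DpS expnSr; apply: leq_mul; first by apply: IH; lia.
have := wb_le hj; have := ltn_pmod (E (2 + i * m + j)) (isT : 0 < 2).
case: (E (2 + n * m + j)) => [|[|]] //= *; rewrite ?muln0 ?muln1 ?mul0n ?mul1n ?add0n ?addn0; lia.
Qed.

Lemma V320 : 320 <= V.
Proof. rewrite /V; lia. Qed.
Lemma powV j : j <= m -> 2 ^ j <= V.
Proof.
move=> hj; apply: (@leq_trans (2 ^ (n * m))); last by rewrite /V leq_addr.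
rewrite leq_pexp2l //; apply: leq_trans hj _; by rewrite leq_pmull.
Qed.
Lemma LV : 2 + n * m + m <= V.
Proof. rewrite /V; lia. Qed.

Lemma mul_le1 a b : b <= 1 -> a * b <= a.
Proof. by move=> h; rewrite -{2}(muln1 a) leq_mul2l h orbT. Qed.
Lemma mul_le1l a b : a <= 1 -> a * b <= b.
Proof. by move=> h; rewrite mulnC mul_le1. Qed.

Lemma fixed_frame s s' (l : seq nat) : fixed s -> (forall k, k \notin l -> nth 0 s' k = nth 0 s k) ->
  all (fun k => k \notin l) [:: 0; 2; 3; 4; 8; 20] -> fixed s'.
Proof.
move=> [f0 [f2 [f3 [f4 [f8 f20]]]]] fr /and5P [h0 h2 h3 h4 /andP [h8 /andP [h20 _]]].
by rewrite /fixed !fr.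
Qed.

Lemma a_lt i j : i < n -> j < m -> 2 <= 2 + i * m + j < 2 + n * m.
Proof.
move=> hi hj; have : i.+1 * m <= n * m by rewrite leq_mul2r hi orbT.
rewrite mulSn; lia.
Qed.

Lemma inner i c s K Q : i < n -> c <= m ->
  fixed s -> nth 0 s 5 = 2 + i * m + (m - c) -> nth 0 s 6 = 2 + n * m + (m - c) ->
  nth 0 s 7 = c -> nth 0 s 9 = Tp i (m - c) -> nth 0 s 10 = Dp i (m - c) ->
  nth 0 s 11 = Zp i (m - c) -> allb V s ->
  (forall s', allb V s' -> fixed s' -> nth 0 s' 5 = 2 + i * m + m ->
     nth 0 s' 6 = 2 + n * m + m -> nth 0 s' 9 = Tp i m -> nth 0 s' 10 = Dp i m ->
     nth 0 s' 11 = Zp i m -> nth 0 s' 12 = nth 0 s 12 -> nth 0 s' 13 = nth 0 s 13 ->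
     XG V Q 120 (rmem H s') K) ->
  XG V Q 91 (rmem H s) (c * 29 + K.+1).
Proof.
move=> hi; elim: c s => [|c IH] s hc fs e5 e6 e7 e9 e10 e11 hs hx.
  rewrite mul0n add0n; eapply (ex_jz_t hH); [reflexivity | by [] | exact: e7 | exact: hs |].
  by rewrite subn0 in e5 e6 e9 e10 e11; apply: hx.
have -> : c.+1 * 29 + K.+1 = (c * 29 + K.+1).+4.+4.+4.+4.+4.+4.+4.+1 by rewrite mulSn; lia.
set j := m - c.+1.
have hj : j < m by rewrite /j; lia.
have hj1 : m - c = j.+1 by rewrite /j; lia.
eapply (ex_jz_f hH); [reflexivity | by [] | by rewrite e7 | exact: hs |].
have [ha1 ha2] := andP (a_lt hi hj).
eapply (read_mac (a := 2 + i * m + j)); try reflexivity; try eassumption.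
  by rewrite ha1 /=; lia.
move=> s1 hb1 e14 fr1.
have fs1 : fixed s1 by apply: (fixed_frame fs fr1).
case: (fs1) => _ [_ [_ [_ [_ f20]]]].
wr hH; first by rewrite e14 f20; have := V320; lia.
wr hH; first by rewrite e14 f20; have := V320; have := cd_le hi hj; lia.
have fs2 := @fixed_set _ 17 (E (2 + i * m + j) %/ 2) (@fixed_set s1 16 (E (2 + i * m + j) %% 2) fs1 isT) isT.
rewrite e14 f20 in hb0 *.
eapply (read_mac (a := 2 + n * m + j)); try reflexivity; try eassumption.
  by rewrite !nthS /= fr1 // e6 hj1.
  by apply/andP; split; lia.
move=> s3 hb3 e18 fr3.
have fs3 : fixed s3 by apply: (fixed_frame fs2 fr3).
case: (fs3) => f0 [f2 [f3 [f4 [f8 f20']]]].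
have g5 : nth 0 s3 5 = 2 + i * m + j by rewrite fr3 // !nthS /= fr1 // e5 hj1.
have g6 : nth 0 s3 6 = 2 + n * m + j by rewrite fr3 // !nthS /= fr1 // e6 hj1.
have g7 : nth 0 s3 7 = c.+1 by rewrite fr3 // !nthS /= fr1 // e7.
have g9 : nth 0 s3 9 = Tp i j by rewrite fr3 // !nthS /= fr1 // e9 hj1.
have g10 : nth 0 s3 10 = Dp i j by rewrite fr3 // !nthS /= fr1 // e10 hj1.
have g11 : nth 0 s3 11 = Zp i j by rewrite fr3 // !nthS /= fr1 // e11 hj1.
have g12 : nth 0 s3 12 = nth 0 s 12 by rewrite fr3 // !nthS /= fr1.
have g13 : nth 0 s3 13 = nth 0 s 13 by rewrite fr3 // !nthS /= fr1.
have g16 : nth 0 s3 16 = E (2 + i * m + j) %% 2 by rewrite fr3 // !nthS.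
have g17 : nth 0 s3 17 = E (2 + i * m + j) %/ 2 by rewrite fr3 // !nthS.
set x := E (2 + i * m + j) in g16 g17.
set w := E (2 + n * m + j) in e18.
have hx2 : x <= 2 by apply: cd_le.
have hw : w <= 1 by apply: wb_le.
have hh : x %% 2 <= 1 by lia.
have ho : x %/ 2 <= 1 by lia.
have hT := Tp_le i j; have hD := Dp_le i (ltnW hj); have hZ := Zp_le i j.
have pj := powV (ltnW hj); have pj1 := powV hj.
have v3 := V320; have vL := LV.
have hy : (1 - x %/ 2) * w + (1 - w) * (1 + x %% 2) <= 2.
  by case: (w) hw => [|[|]] //= _; rewrite ?muln0 ?muln1 ?mul0n ?mul1n ?add0n ?addn0; lia.
rewrite expnS in pj1.
wr hH; first by rewrite g9 g16; exact: leq_trans (mul_le1 _ hh) (leq_trans hT pj).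
wr hH; first by rewrite g9 g16; have := mul_le1 (Tp i j) hh; clear -hT pj1; lia.
wr hH; first by rewrite f2 g17; clear -v3; lia.
wr hH; first by rewrite g11 f2 g17; have := mul_le1 (Zp i j) (leq_subr (x %/ 2) 1); clear -v3 hZ; lia.
wr hH; first by rewrite f2 g17 e18; have := mul_le1 (1 - x %/ 2) hw; clear -v3; lia.
wr hH; first by rewrite f2 e18; clear -v3; lia.
wr hH; first by rewrite f2 g16; clear -v3 hh; lia.
wr hH; first by rewrite f2 e18 g16; have := mul_le1l (1 + x %% 2) (leq_subr w 1); clear -v3 hh; lia.
wr hH; first by rewrite f2 e18 g16 g17; clear -v3 hy; lia.
wr hH; first by rewrite g10 f2 e18 g16 g17; apply: leq_trans (leq_mul hD hy) _; rewrite mulnC.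
wr hH; first by rewrite g5 f2; have := a_lt hi hj; clear -vL; lia.
wr hH; first by rewrite g6 f2; clear -vL hj; lia.
wr hH; first by rewrite g7 f2; clear -vL hc; lia.
eapply (ex_jmp hH); [reflexivity | assumption |].
apply: IH; first by clear -hc; lia.
- by do 13 (apply: fixed_set => //).
- by rewrite !nthS /= g5 f2 hj1; clear; lia.
- by rewrite !nthS /= g6 f2 hj1; clear; lia.
- by rewrite !nthS /= g7 f2; clear; lia.
- by rewrite !nthS /= g9 g16 hj1 TpS mulnDr muln1.
- by rewrite !nthS /= g10 f2 e18 g16 g17 hj1 DpS.
- by rewrite !nthS /= g11 f2 g17 hj1 ZpS.
- assumption.
move=> s' h1 h2 h3 h4 h5 h6 h7 h8 h9; apply: hx => //.
  by rewrite h8 !nthS /= g12.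
by rewrite h9 !nthS /= g13.
Qed.

Definition goodp i := Tp i m - (Dp i m - Zp i m).
Definition accp I := \prod_(i < I) goodp i.
Definition denp I := \prod_(i < I) Tp i m.

Lemma accp_le I : accp I <= 2 ^ (I * m).
Proof.
elim: I => [|I IH]; first by rewrite /accp big_ord0.
rewrite /accp big_ord_recr /= mulSn addnC expnD; apply: leq_mul => //.
apply: leq_trans (leq_subr _ _) (Tp_le _ _).
Qed.
Lemma denp_le I : denp I <= 2 ^ (I * m).
Proof.
elim: I => [|I IH]; first by rewrite /denp big_ord0.
by rewrite /denp big_ord_recr /= mulSn addnC expnD; apply: leq_mul => //; apply: Tp_le.
Qed.
Lemma powV2 I : I <= n -> 2 ^ (I * m) <= V.
Proof.
move=> hI; apply: (@leq_trans (2 ^ (n * m))); last by rewrite /V leq_addr.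
by rewrite leq_pexp2l // leq_mul2r hI orbT.
Qed.

Lemma outer r I s K Q : I + r = n ->
  fixed s -> nth 0 s 5 = 2 + I * m -> nth 0 s 6 = 2 + n * m ->
  nth 0 s 12 = accp I -> nth 0 s 13 = denp I -> allb V s ->
  (forall s', allb V s' -> fixed s' -> nth 0 s' 12 = accp n -> nth 0 s' 13 = denp n ->
     XG V Q 126 (rmem H s') K) ->
  XG V Q 85 (rmem H s) (r * (m * 29 + 13) + K.+2).
Proof.
elim: r I s => [|r IH] I s hI fs e5 e6 e12 e13 hs hx.
  rewrite addn0 in hI; subst I.
  have vL := LV; case: (fs) => f0 [f2 [f3 [f4 [f8 f20]]]].
  rewrite mul0n add0n.
  wr hH; first by rewrite f4 e5; clear -vL; lia.
  eapply (ex_jz_t hH); [reflexivity | by [] | by rewrite nthS /= f4 e5 subnn | assumption |].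
  apply: hx; [done | exact: fixed_set | by rewrite nthS | by rewrite nthS].
have hIn : I < n by rewrite -hI; clear; lia.
have -> : r.+1 * (m * 29 + 13) + K.+2 =
  (m * 29 + ((r * (m * 29 + 13) + K.+2).+4.+2).+1).+4.+2 by rewrite mulSn; clear; lia.
have vL := LV; have v3 := V320.
case: (fs) => f0 [f2 [f3 [f4 [f8 f20]]]].
wr hH; first by rewrite f4 e5; clear -vL; lia.
have nz : (2 + n * m) - (2 + I * m) != 0.
  have : I.+1 * m <= n * m by rewrite leq_mul2r hIn orbT.
  rewrite mulSn; clear -m0; lia.
eapply (ex_jz_f hH); [reflexivity | by [] | by rewrite nthS /= f4 e5 | assumption |].
wr hH; first by clear -v3; lia.
wr hH; first by clear -v3; lia.
wr hH; first by clear -v3; lia.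
wr hH; first by rewrite f8 f2 muln1; clear -vL; lia.
eapply (inner (i := I) (c := m)); first exact: hIn.
- by [].
- by do 5 (apply: fixed_set => //).
- by rewrite !nthS /= e5 subnn addn0.
- by rewrite !nthS /= e6 subnn addn0.
- by rewrite !nthS /= f8 f2 muln1.
- by rewrite !nthS /= subnn /Tp big_ord0.
- by rewrite !nthS /= subnn /Dp big_ord0.
- by rewrite !nthS /= subnn /Zp big_ord0.
- assumption.
move=> s1 hbI fs1 h5 h6 h9 h10 h11 h12 h13.
rewrite !nthS /= in h12 h13.
case: (fs1) => _ [g2 [_ [_ [g8 _]]]].
have hT := Tp_le I m; have pm := powV (leqnn m).
have hA := accp_le I; have hDn := denp_le I.
have pI : 2 ^ (I * m) * 2 ^ m <= V by rewrite -expnD; have := powV2 hIn; rewrite mulSn addnC.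
wr hH; first by rewrite h6 g8; clear -vL; lia.
wr hH; first by rewrite h10 h11; have := Dp_le I (leqnn m); clear -pm; lia.
wr hH; first by rewrite h9 h10 h11; clear -hT pm; lia.
wr hH; first by rewrite h12 e12 h9 h10 h11; apply: leq_trans pI;
  apply: leq_mul => //; apply: leq_trans (leq_subr _ _) hT.
wr hH; first by rewrite h13 e13 h9; apply: leq_trans pI; apply: leq_mul.
eapply (ex_jmp hH); [reflexivity | assumption |].
apply: (IH I.+1); first by rewrite -hI; clear; lia.
- by do 5 (apply: fixed_set => //).
- by rewrite !nthS /= h5 mulSn; clear; lia.
- by rewrite !nthS /= h6 g8; clear; lia.
- by rewrite !nthS /= h12 e12 h9 h10 h11 /accp big_ord_recr.
- by rewrite !nthS /= h13 e13 h9 /denp big_ord_recr.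
- assumption.
- exact: hx.
Qed.
End Main.


Lemma ex_gen V Q pc M K : nth IHalt prog pc <> IHalt -> mb M V ->
  XG V Q (step pc M (nth IHalt prog pc)).1.1 (step pc M (nth IHalt prog pc)).1.2 K ->
  XG V Q pc M K.+1.
Proof.
move=> hn hM; case E: step => [[pc' M'] c] /= [M2 [hx hq]].
by exists M2; split => //; apply: exS hn hM E hx.
Qed.

Lemma mb_upd M d v V : mb M V -> v <= V -> mb (upd M d v) V.
Proof. by move=> hM hv x; rewrite /upd; case: ifP. Qed.

Section Setup.
Variables (n m : nat) (p : 'I_n -> 'I_m -> tri) (W : {set 'I_m}).
Let E := encode p W.
Let base := 16 * (n * m + m).
Let V := 2 ^ (n * m) + 64 * (n * m + n + m + 2).
Hypotheses (n0 : 0 < n) (m0 : 0 < m).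

Definition Ck k M := [/\ mb M V, M 0 = base, M base = m,
   (forall x, 2 <= x < base -> M x = E x) & (forall j, 2 <= j < 2 + k -> M (base + j) = E j)].

Lemma base32 : 32 <= base.
Proof. rewrite /base; have : 0 < n * m by rewrite muln_gt0 n0 m0. lia. Qed.

Lemma bV : base + 24 <= V.
Proof. rewrite /base /V; have := leq_addl (2 ^ (n * m)) (64 * (n * m + n + m + 2)); lia. Qed.

Lemma copy r k M K Q : k + r = 22 -> Ck k M ->
  (forall M', Ck 22 M' -> XG V Q 73 M' K) -> XG V Q (7 + 3 * k) M (r * 3 + K).
Proof.
elim: r k M => [|r IH] k M hk hC hx.
  by rewrite addn0 in hk; subst k; apply: hx.
have hk' : k < 22 by lia.
case: (prog_copy hk') => c1 c2 c3.
case: hC => hM h0 hb hE hc.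
have b32 := base32; have bv := bV.
have -> : r.+1 * 3 + K = (r * 3 + K).+3 by rewrite mulSn; lia.
apply: ex_gen; [by rewrite c1 | done | rewrite c1 /=].
set M1 := upd M 1 (2 + k).
have m10 : M1 0 = base by rewrite /M1 /upd /= h0.
have m11 : M1 1 = 2 + k by rewrite /M1 /upd /=.
have mb1 : mb M1 V by apply: mb_upd => //; lia.
apply: ex_gen; [by rewrite c2 | done | rewrite c2 /= m10 m11].
set M2 := upd M1 1 (base + (2 + k)).
have m21 : M2 1 = base + (2 + k) by rewrite /M2 /upd /=.
have m2k : M2 (2 + k) = E (2 + k).
  rewrite /M2 /M1 /upd /=; apply: hE; lia.
have mb2 : mb M2 V by apply: mb_upd => //; lia.
apply: ex_gen; [by rewrite c3 | done | rewrite c3 /= m21 m2k].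
have -> : (7 + 3 * k).+3 = 7 + 3 * k.+1 by lia.
apply: IH; [by lia | | exact: hx].
split.
- by apply: mb_upd => //; rewrite -m2k.
- rewrite /M2 /M1 /upd /=; repeat (case: ifP => [/eqP ?|_]; first by lia).
  by rewrite h0.
- rewrite /M2 /M1 /upd /=; repeat (case: ifP => [/eqP ?|_]; first by lia).
  by rewrite hb.
- move=> x hx2; rewrite /M2 /M1 /upd /=; repeat (case: ifP => [/eqP ?|_]; first by lia).
  by apply: hE.
- move=> j hj; rewrite /M2 /M1 /upd /=; case: ifP => [/eqP ej|/eqP nj].
    by have -> : j = 2 + k by lia.
  repeat (case: ifP => [/eqP ?|_]; first by lia).
  by apply: hc; lia.
Qed.
Lemma mbE : mb E V.
Proof. move=> x; apply: leq_trans (E_le p W n0 m0 x) _; rewrite /V; lia. Qed.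

Lemma start K Q : (forall M, Ck 0 M -> XG V Q 7 M K) -> XG V Q 0 E K.+4.+3.
Proof.
move=> hx; have mE := mbE; have bv := bV; have b32 := base32.
have e0 : E 0 = n by [].
have e1 : E 1 = m by [].
apply: ex_gen; [by [] | done | rewrite /= e0 e1].
set M1 := upd E 0 (n * m).
have mb1 : mb M1 V by apply: mb_upd => //; rewrite /V; lia.
have m10 : M1 0 = n * m by rewrite /M1 /upd.
have m11 : M1 1 = m by rewrite /M1 /upd.
apply: ex_gen; [by [] | done | rewrite /= m10 m11].
set X := n * m + m.
have hX : 16 * X = base by [].
set M2 := upd M1 0 X.
have mb2 : mb M2 V by apply: mb_upd => //; rewrite /V; lia.
have m20 : M2 0 = X by rewrite /M2 /upd.
apply: ex_gen; [by [] | done | rewrite /= m20].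
set M3 := upd M2 0 (X + X).
have mb3 : mb M3 V by apply: mb_upd => //; rewrite /V /X; lia.
have m30 : M3 0 = X + X by rewrite /M3 /upd.
apply: ex_gen; [by [] | done | rewrite /= m30].
set M4 := upd M3 0 (X + X + (X + X)).
have mb4 : mb M4 V by apply: mb_upd => //; rewrite /V /X; lia.
have m40 : M4 0 = X + X + (X + X) by rewrite /M4 /upd.
apply: ex_gen; [by [] | done | rewrite /= m40].
set M5 := upd M4 0 (X + X + (X + X) + (X + X + (X + X))).
have mb5 : mb M5 V by apply: mb_upd => //; rewrite /V /X; lia.
have m50 : M5 0 = X + X + (X + X) + (X + X + (X + X)) by rewrite /M5 /upd.
apply: ex_gen; [by [] | done | rewrite /= m50].
have hb : X + X + (X + X) + (X + X + (X + X)) + (X + X + (X + X) + (X + X + (X + X))) = base.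
  by rewrite -hX; lia.
rewrite hb.
set M6 := upd M5 0 base.
have mb6 : mb M6 V by apply: mb_upd => //; lia.
have m60 : M6 0 = base by rewrite /M6 /upd.
have m61 : M6 1 = m by rewrite /M6 /M5 /M4 /M3 /M2 /upd.
apply: ex_gen; [by [] | done | rewrite /= m60 m61].
apply: hx; split.
- by apply: mb_upd => //; rewrite /V; lia.
- by rewrite /upd; case: ifP => [/eqP ?|_]; [lia | ].
- by rewrite /upd eqxx.
- move=> x hx2; rewrite /upd; case: ifP => [/eqP ?|_]; first by lia.
  rewrite /M6 /M5 /M4 /M3 /M2 /M1 /upd.
  by repeat (case: ifP => [/eqP ?|_]; first by lia).
- move=> j; lia.
Qed.
End Setup.


Lemma rmem_mkseq H : rmem H (mkseq H 24) = H.
Proof.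
apply: functional_extensionality => x; rewrite /rmem; case: ifP => // hx.
by rewrite nth_mkseq.
Qed.

Section Final.
Variables (n m : nat) (p : 'I_n -> 'I_m -> tri) (W : {set 'I_m}).
Hypotheses (n0 : 0 < n) (m0 : 0 < m).
Let E := encode p W.
Let base := 16 * (n * m + m).
Let V := 2 ^ (n * m) + 64 * (n * m + n + m + 2).

Lemma after_copy H K Q : Ck p W 22 H ->
  (forall s', allb V s' -> fixed n m s' -> nth 0 s' 12 = accp p W n -> nth 0 s' 13 = denp p W n ->
     XG V Q 126 (rmem H s') K) ->
  XG V Q 73 H (n * (m * 29 + 13) + K.+2).+4.+4.+4.
Proof.
case=> hH h0 hb hE hc hx.
have b32 := base32 n0 m0; have vL := LV n0 m0; have v3 := V320 n0 m0.
have Lb : 2 + n * m + m <= base by rewrite /base; lia.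
have Hrd : forall a, 2 <= a < 2 + n * m + m -> 24 <= addr base a /\ H (addr base a) = E a.
  move=> a ha; rewrite /addr; case: (ltnP a 24) => a24.
    have -> : 24 - a - (24 - a - 1) = 1 by lia.
    rewrite mul1n; split; first by lia.
    by apply: hc; lia.
  have -> : 24 - a = 0 by lia.
  rewrite mul0n add0n; split => //; apply: hE; lia.
rewrite -{1}(rmem_mkseq H).
have hs : allb V (mkseq H 24).
  apply/(all_nthP 0) => i; rewrite size_mkseq => hi; rewrite nth_mkseq //; exact: hH.
eapply (ex_load hH); [reflexivity | by [] | by [] | by rewrite /= h0; lia | exact: hs |].
rewrite /= h0 hb => hs1.
wr hH; first by lia.
wr hH; first by lia.
wr hH; first by lia.
wr hH; first by lia.
wr hH; first by rewrite mulKn //; lia.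
rewrite mulKn // in hb4 *.
wr hH; first by lia.
rewrite addnK in hb5 *.
wr hH; first by lia.
wr hH; first by lia.
wr hH; first by rewrite muln1; lia.
rewrite muln1 in hb8 *.
wr hH; first by lia.
wr hH; first by lia.
apply: (outer n0 m0 hH Hrd (r := n) (I := 0)) => //.
- by rewrite /fixed /=; do !split => //; lia.
- by rewrite /=; lia.
- by rewrite /= /accp big_ord0.
- by rewrite /= /denp big_ord0.
Qed.


Definition Ktot := (22 * 3 + (n * (m * 29 + 13) + 2.+2).+4.+4.+4).+4.+3.

Lemma main_xg : XG V (fun M => M 0 = accp p W n /\ M 1 = denp p W n) 0 E Ktot.
Proof.
apply: (start n0 m0) => M hC.
apply: (copy n0 m0 (r := 22) (k := 0) _ hC) => // M' hC'.
apply: after_copy => // s' hs' fs' e12 e13.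
have hH : mb M' V by case: hC'.
case: (fs') => _ [f2 _].
have pa : accp p W n <= V by apply: leq_trans (accp_le p W n0 m0 n) (powV2 m (leqnn n)).
have pd : denp p W n <= V by apply: leq_trans (denp_le p W n0 m0 n) (powV2 m (leqnn n)).
wr hH; first by rewrite e12 f2 muln1.
wr hH; first by rewrite e13 f2 muln1.
eexists; split; first exact: ex0.
by rewrite /rmem /= !nthS /= e12 e13 f2 !muln1.
Qed.
End Final.


Lemma powE a b : Nat.pow a b = a ^ b.
Proof. elim: b => [|b IH] //=; by rewrite expnS IH. Qed.

Section Link.
Variables (n m : nat) (p : 'I_n -> 'I_m -> tri) (W : {set 'I_m}).
Hypotheses (n0 : 0 < n) (m0 : 0 < m).

Lemma Tp_Trow (i : 'I_n) : Tp p W i m = Trow p i.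
Proof. by rewrite /Tp /Trow; apply: eq_bigr => c _; rewrite (E_code p W n0 m0). Qed.

Lemma goodp_good (i : 'I_n) : goodp p W i = good p W i.
Proof.
rewrite /goodp /good Tp_Trow; congr (_ - (_ - _)).
  rewrite /Dp /Drow; apply: eq_bigr => c _; rewrite (E_code p W n0 m0) E_w /hf /onf.
  by case: (c \in W) => /=; rewrite ?muln0 ?muln1 ?mul0n ?mul1n ?add0n ?addn0 ?subnn ?subn0.
by rewrite /Zp /Zrow; apply: eq_bigr => c _; rewrite (E_code p W n0 m0).
Qed.

Lemma accp_count : accp p W n = count_JR n p W.
Proof. by rewrite count_JR_E // /accp; apply: eq_bigr => i _; apply: goodp_good. Qed.

Lemma denp_prod : denp p W n = \prod_(i < n) Trow p i.
Proof. by rewrite /denp; apply: eq_bigr => i _; apply: Tp_Trow. Qed.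

Lemma denp_pos : 0 < denp p W n.
Proof. by apply: prodn_gt0 => i; rewrite /Tp; apply: prodn_gt0 => c; rewrite add1n. Qed.

Lemma cost_bound t : t <= Ktot n m * (1 + 6 * blen (2 ^ (n * m) + 64 * (n * m + n + m + 2))) + 1 ->
  t <= (input_size n m).+1 ^ 7.
Proof.
move=> ht.
set S := (input_size n m).+1.
have eS : S = n * m + n + m + 2 by rewrite /S /input_size; lia.
have nm0 : 0 < n * m by rewrite muln_gt0 n0 m0.
have S5 : 5 <= S by rewrite eS; lia.
have hK : Ktot n m <= 100 * S by rewrite /Ktot eS; lia.
set V := 2 ^ (n * m) + 64 * (n * m + n + m + 2).
have hV : V < 2 ^ (2 * S + 8).
  have h1 : 2 ^ (n * m) <= 2 ^ (2 * S + 6) by rewrite leq_pexp2l // eS; lia.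
  have h2 : 64 * S <= 2 ^ (2 * S + 6).
    have hS := ltn_expl S (isT : 1 < 2).
    have : 2 ^ S <= 2 ^ (2 * S) by rewrite leq_pexp2l //; lia.
    have e64 : 2 ^ 6 = 64 by [].
    rewrite expnD e64; lia.
  have h3 : 2 ^ (2 * S + 6) + 2 ^ (2 * S + 6) < 2 ^ (2 * S + 8).
    rewrite addnn -mul2n (expnD 2 (2 * S) 8) (expnD 2 (2 * S) 6).
    have : 0 < 2 ^ (2 * S) by rewrite expn_gt0.
    lia.
  rewrite /V -eS; lia.
have hb : blen V <= 2 * S + 8.
  rewrite /blen; apply/leP; apply: (proj2 (PeanoNat.Nat.le_succ_l _ _)); apply/PeanoNat.Nat.log2_lt_pow2.
    by rewrite /V; apply/ltP; rewrite addn_gt0 expn_gt0.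
  by apply/ltP; rewrite powE.
have h5 : 3125 <= S ^ 5 by apply: (@leq_trans (5 ^ 5)) => //; rewrite leq_exp2r.
apply: leq_trans ht _.
apply: (@leq_trans (100 * S * (1 + 6 * (2 * S + 8)) + 1)).
  by rewrite leq_add2r; apply: leq_mul => //; rewrite leq_add2l leq_mul2l hb orbT.
rewrite (_ : 7 = 2 + 5) // expnD.
nia.
Qed.
End Link.

Theorem theorem10 :
  (exists (P : seq instr) (d : nat),
     forall (n m : nat) (p : 'I_n -> 'I_m -> tri) (W : {set 'I_m}),
       0 < n -> #|W| = n ->
       exists (fuel : nat) (M' : ram_mem) (t : nat),
         run P fuel 0 (encode p W) = Some (M', t) /\
         t <= (input_size n m).+1 ^ d /\
         M' 0 = count_JR n p W)
  /\
  (exists (P : seq instr) (d : nat),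
     forall (n m : nat) (p : 'I_n -> 'I_m -> tri) (W : {set 'I_m}),
       0 < n -> #|W| = n ->
       exists (fuel : nat) (M' : ram_mem) (t : nat),
         run P fuel 0 (encode p W) = Some (M', t) /\
         t <= (input_size n m).+1 ^ d /\
         0 < M' 1 /\
         ((M' 0%N)%:R / (M' 1%N)%:R = JR_prob n p W :> rat)%R).
Proof.
have key : forall (n m : nat) (p : 'I_n -> 'I_m -> tri) (W : {set 'I_m}),
    0 < n -> #|W| = n ->
    exists (fuel : nat) (M' : ram_mem) (t : nat),
      run prog fuel 0 (encode p W) = Some (M', t) /\
      t <= (input_size n m).+1 ^ 7 /\
      M' 0 = count_JR n p W /\ M' 1 = \prod_(i < n) Trow p i.
  move=> n m p W n0 hW.
  have m0 : 0 < m.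
    by have := max_card W; rewrite card_ord hW; lia.
  case: (main_xg p W n0 m0) => M2 [hex [q0 q1]].
  have v3 := V320 n0 m0.
  case: (exec_run prog_ok (ltn_trans _ v3) hex (erefl _)) => // f [t [hr ht]].
  exists f, M2, t; split => //; split; first exact: cost_bound.
  by rewrite q0 q1 accp_count // denp_prod.
split; exists prog, 7 => n m p W n0 hW; case: (key n m p W n0 hW) => f [M' [t [h1 [h2 [h3 h4]]]]];
  exists f, M', t; do !split => //.
all: have m0 : 0 < m by have := max_card W; rewrite card_ord hW; lia.
all: first [by rewrite h4 -(denp_prod p W n0 m0) (denp_pos p W) | by rewrite h3 h4 JR_prob_E].
Qed.
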